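(* Let $\kappa>0$, $u_0>0$, and let $(r(\psi),u(\psi))$ be the profile of a sessile liquid channel, parametrized by the inclination angle $\psi$. Let $R=r(\pi/2)$ and $r_o=\lim_{\psi\to\pi}r(\psi)$. Then for $0<\psi\le\pi$, $$u(\psi)-u_0<\sqrt{\frac{2(1-\cos\psi)}\kappa},$$ and for $\pi/2\le\psi\le\pi$, $$R-r(\psi)<\frac1{\sqrt\kappa}\Big(\sqrt2+\log\big(\tan\tfrac\pi8\big)-2\cos\tfrac\psi2-\log\big(\tan\tfrac\psi4\big)\Big).$$ In particular, $$u(\psi)-u(R)<\frac{\sqrt{2(1-\cos\psi)}-\sqrt2}{\sqrt\kappa}\quad(\pi/2\le\psi\le\pi),\qquad R-r_o<\sqrt{\frac2\kappa},\qquad u(\pi)-u(R)<\frac{2-\sqrt2}{\sqrt\kappa},$$ where $u(R)$ denotes $u(\pi/2)$.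
   Context: $(r(\psi),u(\psi))$, $\psi\in[0,\pi]$, is the solution of $\frac{dr}{d\psi}=\frac{\cos\psi}{\kappa u}$, $\frac{du}{d\psi}=\frac{\sin\psi}{\kappa u}$, $r(0)=0$, $u(0)=u_0$; it is the cross-section profile of the $\kappa$-cylindrical surface solving $\frac{d}{dr}\big(u'/\sqrt{1+u'^2}\big)=\kappa u$, $u(0)=u_0$, $u'(0)=0$, continued past its vertical point $\psi=\pi/2$. *)

(* Defs.v *)
From Stdlib Require Export Reals.
From Coquelicot Require Export Coquelicot.
Open Scope R_scope.

Definition channel_profile (kappa u0 : R) (r u : R -> R) : Prop :=
  continuous_on (fun psi => 0 <= psi <= PI) r /\
  continuous_on (fun psi => 0 <= psi <= PI) u /\
  (forall psi, 0 < psi < PI -> is_derive r psi (cos psi / (kappa * u psi))) /\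
  (forall psi, 0 < psi < PI -> is_derive u psi (sin psi / (kappa * u psi))) /\
  r 0 = 0 /\ u 0 = u0.

(* Main.v *)
Require Import Defs.
From Stdlib Require Import Reals Lra.
From Coquelicot Require Import Coquelicot.
Open Scope R_scope.

Definition clamp (a b t : R) := Rmax a (Rmin b t).

Lemma clamp_in a b t : a <= b -> a <= clamp a b t <= b.
Proof. intros; unfold clamp, Rmax, Rmin; repeat destruct Rle_dec; lra. Qed.

Lemma clamp_id a b t : a <= t <= b -> clamp a b t = t.
Proof. intros; unfold clamp, Rmax, Rmin; repeat destruct Rle_dec; lra. Qed.

Lemma clamp_lip a b t s : a <= b -> Rabs (clamp a b t - clamp a b s) <= Rabs (t - s).
Proof. intros; unfold clamp, Rmax, Rmin; repeat destruct Rle_dec; unfold Rabs;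
  repeat destruct Rcase_abs; lra. Qed.

Lemma ballR (x y e : R) : ball x e y <-> Rabs (y - x) < e.
Proof. reflexivity. Qed.

Lemma clamp_cont a b f x : a <= b ->
  continuous_on (fun t => a <= t <= b) f ->
  continuity_pt (fun t => f (clamp a b t)) x.
Proof.
  intros Hab Hf. apply continuity_pt_filterlim.
  apply filterlim_comp with (G := within (fun t => a <= t <= b) (locally (clamp a b x))).
  - intros P [eps HP]. exists eps. intros y Hy. apply HP.
    + apply ballR. apply ballR in Hy. eapply Rle_lt_trans. apply clamp_lip; auto. exact Hy.
    + apply clamp_in; auto.
  - apply Hf. apply clamp_in; auto.
Qed.

Lemma clamp_cont_pt a b f x : a <= b -> (forall t, a <= t <= b -> continuity_pt f t) ->
  continuity_pt (fun t => f (clamp a b t)) x.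
Proof.
  intros Hab Hf. apply clamp_cont; auto. intros t Ht.
  apply (filterlim_filter_le_1 (F := locally t)).
  - intros P HP. apply filter_imp with (2 := HP). auto.
  - apply continuity_pt_filterlim. auto.
Qed.

Lemma mvt_on f df a b : a < b ->
  (forall x, continuity_pt (fun t => f (clamp a b t)) x) ->
  (forall x, a < x < b -> is_derive f x (df x)) ->
  exists c, a <= c <= b /\ f b - f a = df c * (b - a).
Proof.
  intros Hab Hc Hd.
  destruct (MVT_gen (fun t => f (clamp a b t)) a b df) as [c [Hc1 Hc2]].
  - rewrite (Rmin_left a b), (Rmax_right a b) by lra. intros x Hx.
    apply is_derive_ext_loc with f; [|apply Hd; auto].
    assert (He : 0 < Rmin (x - a) (b - x)) by (apply Rmin_pos; lra).
    exists (mkposreal _ He). intros y Hy. change (Rabs (y - x) < Rmin (x-a) (b-x)) in Hy.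
    rewrite clamp_id; auto.
    assert (Rmin (x - a) (b - x) <= x - a) by apply Rmin_l.
    assert (Rmin (x - a) (b - x) <= b - x) by apply Rmin_r.
    unfold Rabs in Hy; destruct (Rcase_abs (y - x)); lra.
  - intros; auto.
  - rewrite (Rmin_left a b), (Rmax_right a b) in Hc1 by lra.
    rewrite !clamp_id in Hc2 by lra. exists c; auto.
Qed.

Lemma deriv_sq f x d : is_derive f x d -> is_derive (fun t => f t * f t) x (2 * f x * d).
Proof.
  intros H. assert (H2 := is_derive_mult f f x d d H H Rmult_comm).
  replace (2 * f x * d) with (plus (mult d (f x)) (mult (f x) d)). exact H2.
  unfold plus, mult; simpl. ring.
Qed.
Definition Fk (k t : R) := (-2 * cos (t/2) - ln (sin (t/4) / cos (t/4))) / sqrt k.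

Lemma dFk k t : 0 < k -> 0 < t <= PI ->
  is_derive (Fk k) t ((sin (t/2) - / (2 * sin (t/2))) / sqrt k).
Proof.
  intros Hk Ht. unfold Fk.
  assert (Hs : 0 < sin (t/4)) by (apply sin_gt_0; lra).
  assert (Hc : 0 < cos (t/4)) by (apply cos_gt_0; lra).
  assert (Hsk : 0 < sqrt k) by (apply sqrt_lt_R0; auto).
  assert (E : sin (t/4) * sin (t/4) + cos (t/4) * cos (t/4) = 1).
  { generalize (sin2_cos2 (t/4)); unfold Rsqr; auto. }
  assert (E2 : sin (t/2) = 2 * sin (t/4) * cos (t/4)).
  { rewrite <- sin_2a. f_equal. field. }
  assert (Hs2 : 0 < sin (t/2)) by (apply sin_gt_0; lra).
  replace (/ (2 * sin (t/2))) with ((sin (t/4) * sin (t/4) + cos (t/4) * cos (t/4)) / (2 * sin (t/2)))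
    by (rewrite E; field; lra).
  auto_derive.
  - repeat split; try lra. apply Rmult_lt_0_compat; auto. apply Rinv_0_lt_compat; auto.
  - change (t * / 2) with (t / 2). change (t * / 4) with (t / 4).
    rewrite E2. field. repeat split; lra.
Qed.

Lemma Fk_cont k t : 0 < k -> 0 < t <= PI -> continuity_pt (Fk k) t.
Proof.
  intros. apply continuity_pt_filterlim. exact (ex_derive_continuous (K:=R_AbsRing) (V:=R_NormedModule) (Fk k) t (ex_intro _ _ (dFk k t H H0))).
Qed.
Lemma der_cont f t d : is_derive f t d -> continuity_pt f t.
Proof.
  intros H. apply continuity_pt_filterlim.
  exact (ex_derive_continuous (K:=R_AbsRing) (V:=R_NormedModule) f t (ex_intro _ _ H)).
Qed.

Lemma cos_part k t : 0 < k -> is_derive (fun x => 2 * (1 - cos x) / k) t (2 * sin t / k).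
Proof. intros. auto_derive; auto. field. lra. Qed.

Theorem mainTheorem16 (kappa u0 : R) (r u : R -> R) :
  0 < kappa -> 0 < u0 -> channel_profile kappa u0 r u ->
  (forall psi, 0 < psi <= PI ->
     u psi - u0 < sqrt (2 * (1 - cos psi) / kappa)) /\
  (forall psi, PI / 2 < psi <= PI ->
     r (PI / 2) - r psi <
       / sqrt kappa * (sqrt 2 + ln (tan (PI / 8)) - 2 * cos (psi / 2)
                       - ln (tan (psi / 4)))) /\
  (forall psi, PI / 2 < psi <= PI ->
     u psi - u (PI / 2) < (sqrt (2 * (1 - cos psi)) - sqrt 2) / sqrt kappa) /\
  r (PI / 2) - r PI < sqrt (2 / kappa) /\
  u PI - u (PI / 2) < (2 - sqrt 2) / sqrt kappa.
Proof.
  intros Hk Hu0 [Hrc [Huc [Hr' [Hu' [Hr0 Hu00]]]]].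
  assert (HPI := PI_RGT_0).
  assert (Ucl : forall a b x, 0 <= a -> a < b -> b <= PI ->
     continuity_pt (fun t => u (clamp a b t)) x).
  { intros a b x Ha Hab Hb. apply clamp_cont; [lra|].
    apply continuous_on_subset with (2 := Huc). intros; lra. }
  assert (Rcl : forall a b x, 0 <= a -> a < b -> b <= PI ->
     continuity_pt (fun t => r (clamp a b t)) x).
  { intros a b x Ha Hab Hb. apply clamp_cont; [lra|].
    apply continuous_on_subset with (2 := Hrc). intros; lra. }
  assert (SA : forall p, 0 < p <= PI -> u0 * u0 <= u p * u p).
  { intros p Hp.
    destruct (mvt_on (fun x => u x * u x) (fun x => 2 * u x * (sin x / (kappa * u x))) 0 p)
      as [c [Hc Heq]].
    - lra.
    - intros x. exact (continuity_pt_mult _ _ x (Ucl 0 p x ltac:(lra) ltac:(lra) ltac:(lra))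
                         (Ucl 0 p x ltac:(lra) ltac:(lra) ltac:(lra))).
    - intros x Hx. apply deriv_sq. apply Hu'. lra.
    - rewrite <- Hu00.
      assert (0 <= 2 * u c * (sin c / (kappa * u c)) * (p - 0)); [|lra].
      assert (0 <= sin c) by (apply sin_ge_0; lra).
      destruct (Req_dec (u c) 0) as [E|E].
      + rewrite E. lra.
      + replace (2 * u c * (sin c / (kappa * u c)) * (p - 0)) with (2 * sin c / kappa * p)
          by (field; split; lra).
        apply Rmult_le_pos; [|lra]. unfold Rdiv. apply Rmult_le_pos; [lra|].
        apply Rlt_le, Rinv_0_lt_compat; auto. }
  assert (SB : forall p, 0 <= p <= PI -> u p <> 0).
  { intros p Hp E. destruct (Req_dec p 0) as [->|Hp0].
    - lra.
    - assert (H := SA p ltac:(lra)). rewrite E in H. nra. }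
  assert (SC : forall p, 0 <= p <= PI -> u p * u p = u0 * u0 + 2 * (1 - cos p) / kappa).
  { intros p Hp. destruct (Req_dec p 0) as [->|Hp0].
    - rewrite Hu00, cos_0. field. lra.
    - destruct (mvt_on (fun x => u x * u x - 2 * (1 - cos x) / kappa) (fun _ => 0) 0 p)
        as [c [Hc Heq]].
      + lra.
      + intros x. apply continuity_pt_minus.
        * exact (continuity_pt_mult _ _ x (Ucl 0 p x ltac:(lra) ltac:(lra) ltac:(lra))
                         (Ucl 0 p x ltac:(lra) ltac:(lra) ltac:(lra))).
        * apply (clamp_cont_pt 0 p (fun x => 2 * (1 - cos x) / kappa)); [lra|].
          intros. eapply der_cont. apply cos_part; auto.
      + intros x Hx.
        assert (Hux := SB x ltac:(lra)).
        assert (D := is_derive_minus _ _ x _ _ (deriv_sq u x _ (Hu' x ltac:(lra))) (cos_part kappa x Hk)).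
        replace 0 with (minus (2 * u x * (sin x / (kappa * u x))) (2 * sin x / kappa)).
        * exact D.
        * unfold minus, plus, opp; simpl. field. split; lra.
      + rewrite Hu00, cos_0 in Heq. lra. }
  assert (SD : forall p, 0 <= p <= PI -> 0 < u p).
  { intros p Hp. destruct (Req_dec p 0) as [->|Hp0]; [lra|].
    destruct (Rlt_or_le 0 (u p)) as [H|H]; auto.
    assert (H' : u p < 0) by (assert (Hn := SB p Hp); lra).
    destruct (IVT (fun t => - u (clamp 0 PI t)) 0 p) as [z [Hz Ez]].
    - intros x. apply continuity_pt_opp. apply Ucl; lra.
    - lra.
    - rewrite clamp_id by lra. lra.
    - rewrite clamp_id by lra. lra.
    - rewrite clamp_id in Ez by lra. exfalso. apply (SB z); lra. }
  assert (Hsk : 0 < sqrt kappa) by (apply sqrt_lt_R0; auto).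
  assert (Hkk : sqrt kappa * sqrt kappa = kappa) by (apply sqrt_sqrt; lra).
  assert (Hs2 : sqrt 2 * sqrt 2 = 2) by (apply sqrt_sqrt; lra).
  assert (Hs2p : 0 < sqrt 2) by (apply sqrt_lt_R0; lra).
  assert (sqdiv : forall x y, y <> 0 -> x / y * (x / y) = (x * x) / (y * y)) by (intros; field; auto).
  assert (P1 : forall psi, 0 < psi <= PI -> u psi - u0 < sqrt (2 * (1 - cos psi) / kappa)).
  { intros p Hp.
    assert (Hcos : cos p < 1) by (rewrite <- cos_0; apply cos_decreasing_1; lra).
    set (c := 2 * (1 - cos p) / kappa).
    assert (Hc : 0 < c) by (unfold c; apply Rdiv_lt_0_compat; lra).
    assert (Hsc : sqrt c * sqrt c = c) by (apply sqrt_sqrt; lra).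
    assert (Hscp : 0 < sqrt c) by (apply sqrt_lt_R0; lra).
    assert (E := SC p ltac:(lra)). fold c in E.
    assert (Pu := SD p ltac:(lra)).
    nra. }
  assert (P3 : forall psi, PI / 2 < psi <= PI ->
     u psi - u (PI / 2) < (sqrt (2 * (1 - cos psi)) - sqrt 2) / sqrt kappa).
  { intros p Hp.
    assert (Hcos : cos p < 0) by (apply cos_lt_0; lra).
    set (A := sqrt (2 * (1 - cos p))).
    assert (HA : A * A = 2 * (1 - cos p)) by (apply sqrt_sqrt; lra).
    assert (HAB : sqrt 2 < A) by (apply sqrt_lt_1; lra).
    assert (E1 := SC p ltac:(lra)).
    assert (E2 := SC (PI/2) ltac:(lra)). rewrite cos_PI2 in E2.
    assert (Pu1 := SD p ltac:(lra)).
    assert (Pu2 := SD (PI/2) ltac:(lra)).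
    set (sa := A / sqrt kappa). set (sb := sqrt 2 / sqrt kappa).
    replace ((A - sqrt 2) / sqrt kappa) with (sa - sb) by (unfold sa, sb; field; lra).
    assert (Hsa : sa * sa = 2 * (1 - cos p) / kappa) by (unfold sa; rewrite sqdiv, HA, Hkk; auto; lra).
    assert (Hsb : sb * sb = 2 / kappa) by (unfold sb; rewrite sqdiv, Hs2, Hkk; auto; lra).
    assert (Hsab : sb < sa) by (unfold sa, sb; apply Rmult_lt_compat_r; [apply Rinv_0_lt_compat|]; lra).
    assert (Hsbp : 0 < sb) by (unfold sb; apply Rdiv_lt_0_compat; lra).
    set (up := u p) in *. set (uh := u (PI/2)) in *.
    assert (K1 : up * up = u0 * u0 + sa * sa) by lra.
    assert (K2 : uh * uh = u0 * u0 + sb * sb) by lra.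
    assert (K3 : up * sb < uh * sa).
    { assert ((up * sb) * (up * sb) < (uh * sa) * (uh * sa)).
      { replace ((up * sb) * (up * sb)) with ((up*up) * (sb*sb)) by ring.
        replace ((uh * sa) * (uh * sa)) with ((uh*uh) * (sa*sa)) by ring.
        rewrite K1, K2.
        assert (Q1 : sb * sb < sa * sa) by nra.
        assert (Q2 : u0 * u0 * (sb * sb) < u0 * u0 * (sa * sa)) by (apply Rmult_lt_compat_l; nra).
        nra. }
      assert (0 < uh * sa) by (apply Rmult_lt_0_compat; lra).
      assert (0 < up * sb) by (apply Rmult_lt_0_compat; lra).
      destruct (Rlt_or_le (up * sb) (uh * sa)) as [Q|Q]; auto.
      assert (uh * sa * (uh * sa) <= up * sb * (up * sb)) by (apply Rmult_le_compat; lra).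
      lra. }
    nra. }
  set (K := fun t => r t + Fk kappa t).
  set (dK := fun t => cos t / (kappa * u t) + (sin (t/2) - / (2 * sin (t/2))) / sqrt kappa).
  assert (dKpos : forall c, PI/2 <= c <= PI -> 0 <= dK c /\ (cos c < 0 -> 0 < dK c)).
  { intros c Hc. unfold dK.
    assert (Hs : 0 < sin (c/2)) by (apply sin_gt_0; lra).
    assert (Hcc : cos c = 1 - 2 * sin (c/2) * sin (c/2)).
    { rewrite <- cos_2a_sin. f_equal. field. }
    assert (Hcn : cos c <= 0) by (apply cos_le_0; lra).
    assert (E := SC c ltac:(lra)).
    assert (Pu := SD c ltac:(lra)).
    set (s := sin (c/2)) in *. set (k := sqrt kappa) in *. set (uc := u c) in *.
    assert (Q : 2 * s < k * uc).
    { assert (Q1 : (k*uc)*(k*uc) = kappa * (u0 * u0) + 4 * s * s).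
      { replace ((k*uc)*(k*uc)) with ((k*k)*(uc*uc)) by ring. rewrite Hkk, E, Hcc. field. lra. }
      assert (0 < kappa * (u0*u0)) by (apply Rmult_lt_0_compat; nra).
      assert (0 < k * uc) by (apply Rmult_lt_0_compat; lra).
      destruct (Rlt_or_le (2*s) (k*uc)) as [W|W]; auto.
      assert (k*uc*(k*uc) <= 2*s*(2*s)) by (apply Rmult_le_compat; lra). lra. }
    assert (EQ : cos c / (kappa * uc) + (s - / (2 * s)) / k
                 = (- cos c) * ((k * uc - 2 * s) / (2 * s * kappa * uc))).
    { rewrite <- Hkk. rewrite Hcc. field. repeat split; lra. }
    rewrite EQ.
    assert (0 < (k * uc - 2 * s) / (2 * s * kappa * uc)).
    { apply Rdiv_lt_0_compat; [lra|]. repeat apply Rmult_lt_0_compat; lra. }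
    split; [apply Rmult_le_pos; lra | intros; apply Rmult_lt_0_compat; lra]. }
  assert (Kcl : forall a b x, PI/2 <= a -> a < b -> b <= PI ->
     continuity_pt (fun t => K (clamp a b t)) x).
  { intros a b x Ha Hab Hb. unfold K.
    apply (continuity_pt_plus (fun t => r (clamp a b t)) (fun t => Fk kappa (clamp a b t))).
    - apply Rcl; lra.
    - apply (clamp_cont_pt a b (Fk kappa)); [lra|]. intros. apply Fk_cont; auto; lra. }
  assert (Kd : forall x, PI/2 < x < PI -> is_derive K x (dK x)).
  { intros x Hx. unfold K, dK.
    apply (is_derive_plus r (Fk kappa)). apply Hr'; lra. apply dFk; auto; lra. }
  assert (P2 : forall psi, PI / 2 < psi <= PI -> K (PI/2) < K psi).
  { intros p Hp. set (m := (PI/2 + p)/2).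
    destruct (mvt_on K dK (PI/2) m) as [c1 [Hc1 E1]];
      [unfold m; lra | intros; apply Kcl; unfold m; lra | intros; apply Kd; unfold m in *; lra |].
    destruct (mvt_on K dK m p) as [c2 [Hc2 E2]];
      [unfold m; lra | intros; apply Kcl; unfold m; lra | intros; apply Kd; unfold m in *; lra |].
    destruct (dKpos c1) as [D1 _]; [unfold m in *; lra|].
    destruct (dKpos c2) as [_ D2]; [unfold m in *; lra|].
    assert (D2' : 0 < dK c2) by (apply D2; apply cos_lt_0; unfold m in *; lra).
    assert (0 <= dK c1 * (m - PI/2)) by (apply Rmult_le_pos; unfold m; lra).
    assert (0 < dK c2 * (p - m)) by (apply Rmult_lt_0_compat; unfold m; lra).
    lra. }
  assert (h2 : 1 / sqrt 2 = sqrt 2 / 2) by (field_simplify_eq; [nra | lra]).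
  assert (P2' : forall psi, PI / 2 < psi <= PI ->
     r (PI / 2) - r psi <
       / sqrt kappa * (sqrt 2 + ln (tan (PI / 8)) - 2 * cos (psi / 2)
                       - ln (tan (psi / 4)))).
  { intros p Hp. assert (H := P2 p Hp). unfold K, Fk in H.
    replace (PI/2/2) with (PI/4) in H by field.
    replace (PI/2/4) with (PI/8) in H by field.
    rewrite cos_PI4, h2 in H. unfold tan.
    replace (/ sqrt kappa * (sqrt 2 + ln (sin (PI / 8) / cos (PI / 8)) - 2 * cos (p / 2) -
       ln (sin (p / 4) / cos (p / 4))))
     with ((-2 * cos (p / 2) - ln (sin (p / 4) / cos (p / 4))) / sqrt kappa -
           (-2 * (sqrt 2 / 2) - ln (sin (PI / 8) / cos (PI / 8))) / sqrt kappa)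
     by (field; lra).
    lra. }
  split; [exact P1|]. split; [exact P2'|]. split; [exact P3|]. split.
  - assert (H := P2' PI ltac:(lra)).
    replace (PI/4) with (PI/4) in H by auto. rewrite cos_PI2, tan_PI4, ln_1 in H.
    assert (Ht : 0 < tan (PI/8) < 1).
    { split. apply tan_gt_0; lra. rewrite <- tan_PI4. apply tan_increasing_1; lra. }
    assert (Hl : ln (tan (PI/8)) < 0) by (rewrite <- ln_1; apply ln_increasing; lra).
    rewrite sqrt_div_alt by lra.
    assert (/ sqrt kappa * (sqrt 2 + ln (tan (PI / 8)) - 2 * 0 - 0) < sqrt 2 / sqrt kappa).
    { unfold Rdiv. rewrite (Rmult_comm (sqrt 2)). apply Rmult_lt_compat_l. apply Rinv_0_lt_compat; lra. lra. }
    lra.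
  - assert (H := P3 PI ltac:(lra)). rewrite cos_PI in H.
    replace (2 * (1 - -1)) with (2 * 2) in H by ring. rewrite sqrt_square in H by lra. exact H.
Qed.
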